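(* Let the data $y\in\mathbb{R}^n$, $X\in\mathbb{R}^{n\times p}$, $Z\in\mathbb{R}^{n\times q}$ be fixed, with $Z^TZ$ and $X^TP_ZX$ non-singular, and thin SVDs $X=U_X\Sigma_XV_X^T$, $Z=U_Z\Sigma_ZV_Z^T$. Let $\widehat e=y-X\widehat\beta_{2SLS}$ with $\widehat\beta_{2SLS}=(X^TP_ZX)^{-1}X^TP_Zy$, and let $\Pi\in\mathbb{R}^{m\times n}$ be random. Given $\varepsilon_1,\varepsilon_2,\varepsilon_3,\delta\in(0,1/2)$, suppose that jointly with probability at least $1-\delta$: $\|U_Z^T\Pi^T\Pi U_Z-I_q\|_2\le\varepsilon_1$, $\|U_Z^T\Pi^T\Pi U_X-U_Z^TU_X\|_2\le\varepsilon_2$, $\|U_Z^T\Pi^T\Pi\widehat e-U_Z^T\widehat e\|\le\varepsilon_3\|\widehat e\|$; and that $\sigma_{\min}^2(U_Z^TU_X)\ge 2f_1(\varepsilon_1,\varepsilon_2)$. Let $\widetilde A:=U_X^T\Pi^T\Pi U_Z(U_Z^T\Pi^T\Pi U_Z)^{-1}U_Z^T\Pi^T\Pi U_X$. Then with probability at least $1-\delta$, $\sigma_{\min}(\widetilde A)\ge\frac12\sigma_{\min}^2(U_Z^TU_X)$.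
   Context: $P_Z=Z(Z^TZ)^{-1}Z^T$; $f_1(\varepsilon_1,\varepsilon_2):=[\varepsilon_1+\varepsilon_2(\varepsilon_2+2)]/(1-\varepsilon_1)$. $\|\cdot\|_2$ is the spectral norm, $\sigma_{\min}$ the smallest singular value. *)

(* Defs.v *)
From HB Require Import structures.
From mathcomp Require Import all_boot all_order all_algebra.
From mathcomp Require Import all_classical all_reals all_analysis.
Set Implicit Arguments. Unset Strict Implicit. Unset Printing Implicit Defensive.
Import Order.TTheory GRing.Theory Num.Theory.
Local Open Scope classical_set_scope.
Local Open Scope ring_scope.

Definition vnorm (R : realType) (k : nat) (v : 'cV[R]_k) : R :=
  Num.sqrt (\sum_(i < k) v i 0 ^+ 2).

Definition usphere (R : realType) (k : nat) : set 'cV[R]_k :=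
  [set v | vnorm v = 1].

Definition spnorm (R : realType) (a b : nat) (A : 'M[R]_(a, b)) : R :=
  sup [set vnorm (A *m v) | v in @usphere R b].

(* smallest singular value of A (a x b with a >= b): inf_{||v||=1} ||A v|| *)
Definition smin (R : realType) (a b : nat) (A : 'M[R]_(a, b)) : R :=
  inf [set vnorm (A *m v) | v in @usphere R b].

Definition projmx (R : realType) (n q : nat) (Z : 'M[R]_(n, q)) : 'M[R]_n :=
  Z *m invmx (Z^T *m Z) *m Z^T.

Definition f1 (R : realType) (e1 e2 : R) : R := (e1 + e2 * (e2 + 2)) / (1 - e1).

Definition thin_svd (R : realType) (n k : nat) (A : 'M[R]_(n, k))
  (U : 'M[R]_(n, k)) (S : 'M[R]_k) (V : 'M[R]_k) : Prop :=
  [/\ A = U *m S *m V^T, U^T *m U = 1%:M, V^T *m V = 1%:M,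
      is_diag_mx S & forall i, 0 <= S i i].

(* Main.v *)
Require Import Defs.
From HB Require Import structures.
From mathcomp Require Import all_boot all_order all_algebra.
From mathcomp Require Import all_classical all_reals all_analysis.
From mathcomp Require Import ring lra.
Set Implicit Arguments. Unset Strict Implicit. Unset Printing Implicit Defensive.
Import Order.TTheory GRing.Theory Num.Theory.
Local Open Scope classical_set_scope.
Local Open Scope ring_scope.

Section H.
Variable R : realType.

Definition dot k (x y : 'cV[R]_k) : R := \sum_i x i 0 * y i 0.

Lemma dotE k (x y : 'cV[R]_k) : dot x y = (x^T *m y) 0 0.
Proof. by rewrite /dot mxE; apply: eq_bigr => i _; rewrite mxE. Qed.

Lemma dotC k (x y : 'cV[R]_k) : dot x y = dot y x.
Proof. by apply: eq_bigr => i _; rewrite mulrC. Qed.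

Lemma dotDl k (x y z : 'cV[R]_k) : dot (x + y) z = dot x z + dot y z.
Proof. by rewrite /dot -big_split; apply: eq_bigr => i _; rewrite mxE mulrDl. Qed.

Lemma dotNl k (x z : 'cV[R]_k) : dot (- x) z = - dot x z.
Proof. by rewrite /dot -sumrN; apply: eq_bigr => i _; rewrite mxE mulNr. Qed.

Lemma dotZl k c (x z : 'cV[R]_k) : dot (c *: x) z = c * dot x z.
Proof. by rewrite /dot mulr_sumr; apply: eq_bigr => i _; rewrite mxE mulrA. Qed.

Lemma dotDr k (x y z : 'cV[R]_k) : dot z (x + y) = dot z x + dot z y.
Proof. by rewrite !(dotC z) dotDl. Qed.
Lemma dotNr k (x z : 'cV[R]_k) : dot z (- x) = - dot z x.
Proof. by rewrite !(dotC z) dotNl. Qed.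
Lemma dotZr k c (x z : 'cV[R]_k) : dot z (c *: x) = c * dot z x.
Proof. by rewrite !(dotC z) dotZl. Qed.

Lemma dot_ge0 k (x : 'cV[R]_k) : 0 <= dot x x.
Proof. by apply: sumr_ge0 => i _; rewrite -expr2 sqr_ge0. Qed.

Lemma dot_eq0 k (x : 'cV[R]_k) : dot x x = 0 -> x = 0.
Proof.
move=> h; apply/matrixP => i j; rewrite (ord1 j) mxE.
have hp : forall l : 'I_k, xpredT l -> 0 <= x l 0 * x l 0.
  by move=> l _; rewrite -expr2 sqr_ge0.
have := @psumr_eq0P R _ xpredT (fun i => x i 0 * x i 0) hp h i isT.
by move/eqP; rewrite mulf_eq0 orbb => /eqP.
Qed.

Lemma dot_mul k l (A : 'M[R]_(k, l)) x y : dot (A *m x) y = dot x (A^T *m y).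
Proof. by rewrite !dotE trmx_mul mulmxA. Qed.

Lemma vnormE k (x : 'cV[R]_k) : vnorm x = Num.sqrt (dot x x).
Proof. by rewrite /vnorm; congr Num.sqrt; apply: eq_bigr => i _; rewrite expr2. Qed.

Lemma vnorm_ge0 k (x : 'cV[R]_k) : 0 <= vnorm x.
Proof. by rewrite vnormE sqrtr_ge0. Qed.

Lemma vnorm_sq k (x : 'cV[R]_k) : vnorm x ^+ 2 = dot x x.
Proof. by rewrite vnormE sqr_sqrtr // dot_ge0. Qed.

Lemma CS_sq k (x y : 'cV[R]_k) : dot x y ^+ 2 <= dot x x * dot y y.
Proof.
have [/dot_eq0 ->|] := eqVneq (dot x x) 0.
  have d0 : forall z : 'cV[R]_k, dot 0 z = 0.
    by move=> z; rewrite /dot big1 // => i _; rewrite mxE mul0r.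
  by rewrite !d0 expr2 !mul0r.
move=> nz.
have hx : 0 < dot x x by rewrite lt_def nz dot_ge0.
have := dot_ge0 (dot x x *: y - dot x y *: x).
rewrite !(dotDl, dotDr, dotNl, dotNr, dotZl, dotZr) (dotC y x) => h.
have h2 : 0 <= dot x x * (dot x x * dot y y - dot x y ^+ 2) by nra.
rewrite -subr_ge0; move: h2; rewrite pmulr_rge0 //.
Qed.

Lemma CS k (x y : 'cV[R]_k) : `|dot x y| <= vnorm x * vnorm y.
Proof.
have := CS_sq x y; rewrite -!vnorm_sq -exprMn -real_normK ?num_real //.
have := vnorm_ge0 x; have := vnorm_ge0 y.
move=> a b h; rewrite -(ler_pXn2r (_ : 0 < 2)%N) ?nnegrE ?mulr_ge0 //.
Qed.

Lemma dot_le k (x y : 'cV[R]_k) : dot x y <= vnorm x * vnorm y.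
Proof. exact: le_trans (ler_norm _) (CS x y). Qed.

Lemma vnorm_triangle k (x y : 'cV[R]_k) : vnorm (x + y) <= vnorm x + vnorm y.
Proof.
have h : vnorm (x + y) ^+ 2 <= (vnorm x + vnorm y) ^+ 2.
  rewrite vnorm_sq !(dotDl, dotDr) (dotC y x) sqrrD -!vnorm_sq.
  have := dot_le x y; lra.
have := vnorm_ge0 (x + y); have := vnorm_ge0 x; have := vnorm_ge0 y. nra.
Qed.

Lemma vnormN k (x : 'cV[R]_k) : vnorm (- x) = vnorm x.
Proof. by rewrite !vnormE dotNl dotNr opprK. Qed.

Lemma vnormZ k c (x : 'cV[R]_k) : vnorm (c *: x) = `|c| * vnorm x.
Proof. by rewrite !vnormE dotZl dotZr mulrA -expr2 sqrtrM ?sqr_ge0 // sqrtr_sqr. Qed.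


Lemma vnorm0 k : vnorm (0 : 'cV[R]_k) = 0.
Proof. by rewrite -(scale0r (0 : 'cV[R]_k)) vnormZ normr0 mul0r. Qed.

Lemma vnorm_gt0 k (x : 'cV[R]_k) : x != 0 -> 0 < vnorm x.
Proof.
move=> nz; rewrite vnormE sqrtr_gt0 lt_def dot_ge0 andbT.
by apply/eqP => /dot_eq0 h; move: nz; rewrite h eqxx.
Qed.

Lemma op_bounded a b (A : 'M[R]_(a, b)) :
  exists K, forall v, vnorm v = 1 -> vnorm (A *m v) <= K.
Proof.
exists (Num.sqrt (\sum_i dot (row i A)^T (row i A)^T)) => v hv.
rewrite vnormE ler_wsqrtr // /dot; apply: ler_sum => i _.
have -> : (A *m v) i 0 = dot (row i A)^T v.
  by rewrite mxE; apply: eq_bigr => j _; rewrite !mxE.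
rewrite -expr2; apply: le_trans (CS_sq _ _) _.
have dv : dot v v = 1 by rewrite -vnorm_sq hv expr1n.
by rewrite dv mulr1.
Qed.

Lemma spnorm_le a b (A : 'M[R]_(a, b)) e :
  spnorm A <= e -> forall x, vnorm (A *m x) <= e * vnorm x.
Proof.
move=> hs x.
have unit : forall v, vnorm v = 1 -> vnorm (A *m v) <= e.
  move=> v hv; apply: le_trans hs; rewrite /spnorm.
  have [K hK] := op_bounded A.
  apply: ub_le_sup; last by exists v.
  by exists K => _ [w hw <-]; apply: hK.
have [->|nz] := eqVneq x 0; first by rewrite mulmx0 !vnorm0 mulr0.
have hx := vnorm_gt0 nz.
have hv : vnorm ((vnorm x)^-1 *: x) = 1.
  by rewrite vnormZ ger0_norm ?invr_ge0 ?(ltW hx) // mulVf // gt_eqF.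
have eq : A *m x = vnorm x *: (A *m ((vnorm x)^-1 *: x)).
  by rewrite -scalemxAr scalerA mulfV ?scale1r // gt_eqF.
rewrite eq vnormZ ger0_norm ?(ltW hx) // mulrC ler_pM2r //.
exact: unit.
Qed.

Lemma smin_le a b (A : 'M[R]_(a, b)) v : vnorm v = 1 -> smin A <= vnorm (A *m v).
Proof.
move=> hv; rewrite /smin; apply: ge_inf; last by exists v.
by exists 0 => _ [w _ <-]; apply: vnorm_ge0.
Qed.

Lemma smin_ge a b (A : 'M[R]_(a, b)) c : (exists v : 'cV[R]_b, vnorm v = 1) ->
  (forall v, vnorm v = 1 -> c <= vnorm (A *m v)) -> c <= smin A.
Proof.
move=> [v hv] h; rewrite /smin; apply: lb_le_inf.
  by exists (vnorm (A *m v)); exists v.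
by move=> _ [w hw <-]; apply: h.
Qed.


Lemma smin_empty a b (A : 'M[R]_(a, b)) : ~ (exists v : 'cV[R]_b, vnorm v = 1) -> smin A = 0.
Proof.
move=> h; rewrite /smin.
have -> : [set vnorm (A *m v) | v in @usphere R b] = set0.
  by apply/seteqP; split => // x [v hv _]; apply: h; exists v.
exact: inf0.
Qed.

Lemma bessel a b (U : 'M[R]_(a, b)) x : U^T *m U = 1%:M -> vnorm (U^T *m x) <= vnorm x.
Proof.
move=> hU; set y := U^T *m x.
have h := dot_ge0 (x - U *m y).
have e1 : dot x (U *m y) = dot y y by rewrite dotC dot_mul.
have e2 : dot (U *m y) (U *m y) = dot y y by rewrite dot_mul mulmxA hU mul1mx.
move: h; rewrite !(dotDl, dotDr, dotNl, dotNr) e2 (dotC (U *m y) x) e1 => h.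
rewrite !vnormE ler_wsqrtr //; lra.
Qed.

Lemma isom a b (U : 'M[R]_(a, b)) x : U^T *m U = 1%:M -> vnorm (U *m x) = vnorm x.
Proof. by move=> hU; rewrite !vnormE dot_mul mulmxA hU mul1mx. Qed.

Lemma near_id_unit k (B : 'M[R]_k) e : e < 1 -> spnorm (B - 1%:M) <= e -> B \in unitmx.
Proof.
move=> he hs; apply: contraT; rewrite unitmxE unitfE negbK -det_tr => /det0P [v nz hv].
have hB : B *m v^T = 0 by rewrite -[B]trmxK -trmx_mul hv trmx0.
have hw : (B - 1%:M) *m v^T = - v^T.
  by rewrite mulmxBl mul1mx hB sub0r.
have := spnorm_le hs v^T; rewrite hw vnormN.
have : v^T != 0 by apply: contra nz => /eqP h; rewrite -(trmxK v) h trmx0.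
move/vnorm_gt0; nra.
Qed.

End H.
Lemma real_final (R : realType) (a b s g h U W rho D N : R) :
  0 < a < 1/2 -> 0 < b < 1/2 -> 0 <= s -> s <= g -> g <= 1 ->
  s ^+ 2 * (1 - a) >= 2 * (a + b * (b + 2)) ->
  0 <= h -> h <= b -> g <= U + h -> 0 <= U -> 0 <= W -> 0 <= rho -> rho <= a * W ->
  U <= W + rho -> rho ^+ 2 = U ^+ 2 - 2 * D + W ^+ 2 -> D <= N ->
  s ^+ 2 / 2 <= N.
Proof.
move=> /andP[a0 a1] /andP[b0 b1] s0 sg g1 hf h0 hb gU U0 W0 r0 rW UW rr DN.
have r2 : rho ^+ 2 <= a ^+ 2 * W ^+ 2 by nra.
have U2 : U ^+ 2 <= (1 + a) ^+ 2 * W ^+ 2 by nra.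
have stepA : U ^+ 2 <= D * (1 + a) by nra.
have sb : 0 <= s - b by nra.
have stepB : (s - b) ^+ 2 <= U ^+ 2 by nra.
have stepC : (1 + a) * s ^+ 2 / 2 <= (s - b) ^+ 2 by nra.
nra.
Qed.

Theorem lemmaB5 (R : realType) (n p q m : nat)
  (y : 'cV[R]_n) (X : 'M[R]_(n, p)) (Z : 'M[R]_(n, q))
  (UX : 'M[R]_(n, p)) (SX VX : 'M[R]_p)
  (UZ : 'M[R]_(n, q)) (SZ VZ : 'M[R]_q)
  (hZ : Z^T *m Z \in unitmx)
  (hXZ : X^T *m projmx Z *m X \in unitmx)
  (hsvdX : thin_svd X UX SX VX) (hsvdZ : thin_svd Z UZ SZ VZ)
  (e1 e2 e3 delta : R)
  (he1 : 0 < e1 < 1/2) (he2 : 0 < e2 < 1/2) (he3 : 0 < e3 < 1/2)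
  (hdelta : 0 < delta < 1/2)
  (d : measure_display) (T : measurableType d) (P : probability T R)
  (Pi : T -> 'M[R]_(m, n)) :
  let beta := invmx (X^T *m projmx Z *m X) *m X^T *m projmx Z *m y in
  let e := y - X *m beta in
  (exists E : set T, [/\ measurable E, (P E >= (1 - delta)%:E)%E &
     forall w, E w ->
       [/\ spnorm (UZ^T *m (Pi w)^T *m Pi w *m UZ - 1%:M) <= e1,
           spnorm (UZ^T *m (Pi w)^T *m Pi w *m UX - UZ^T *m UX) <= e2 &
           vnorm (UZ^T *m (Pi w)^T *m Pi w *m e - UZ^T *m e) <= e3 * vnorm e]]) ->
  smin (UZ^T *m UX) ^+ 2 >= 2 * f1 e1 e2 ->
  exists F : set T, [/\ measurable F, (P F >= (1 - delta)%:E)%E &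
    forall w, F w ->
      smin (UX^T *m (Pi w)^T *m Pi w *m UZ
              *m invmx (UZ^T *m (Pi w)^T *m Pi w *m UZ)
              *m UZ^T *m (Pi w)^T *m Pi w *m UX)
      >= smin (UZ^T *m UX) ^+ 2 / 2].
Proof.
move=> beta e [E [mE PE hE]] hs; exists E; split => // w /hE [h1 h2 _].
case: hsvdX => _ hUX _ _ _; case: hsvdZ => _ hUZ _ _ _.
set B := UZ^T *m (Pi w)^T *m Pi w *m UZ in h1 *.
set C := UZ^T *m (Pi w)^T *m Pi w *m UX in h2 *.
set G := UZ^T *m UX in h2 hs *.
have -> : UX^T *m (Pi w)^T *m Pi w *m UZ *m invmx B *m UZ^T *m (Pi w)^T *m Pi w *m UX
    = C^T *m (invmx B *m C).
  by rewrite /C !trmx_mul !trmxK !mulmxA.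
have [ex|nex] := pselect (exists v : 'cV[R]_p, vnorm v = 1); last first.
  by rewrite !smin_empty // expr2 mul0r mul0r.
have s0 : 0 <= smin G by apply: smin_ge => // v _; apply: vnorm_ge0.
apply: smin_ge => // v hv.
have Bu : B \in unitmx.
  by apply: (near_id_unit _ h1); case/andP: he1 => _ h; lra.
set u := C *m v; set wv := invmx B *m u.
have Bw : B *m wv = u by rewrite /wv mulmxA mulmxV // mul1mx.
set r := u - wv.
have hr : r = (B - 1%:M) *m wv by rewrite mulmxBl mul1mx Bw.
have rW : vnorm r <= e1 * vnorm wv by rewrite hr; apply: spnorm_le.
have hh : vnorm ((C - G) *m v) <= e2 by have := spnorm_le h2 v; rewrite hv mulr1.
have sg : smin G <= vnorm (G *m v) by apply: smin_le.
have g1 : vnorm (G *m v) <= 1.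
  by rewrite /G -mulmxA -hv -(isom v hUX); apply: bessel.
have gU : vnorm (G *m v) <= vnorm u + vnorm ((C - G) *m v).
  have -> : G *m v = u + - ((C - G) *m v) by rewrite /u mulmxBl opprB addrC subrK.
  by apply: le_trans (vnorm_triangle _ _) _; rewrite vnormN.
have UW : vnorm u <= vnorm wv + vnorm r.
  by rewrite (_ : u = wv + r) ?vnorm_triangle // /r addrC subrK.
have rr : vnorm r ^+ 2 = vnorm u ^+ 2 - 2 * dot u wv + vnorm wv ^+ 2.
  rewrite !vnorm_sq /r !(dotDl, dotDr, dotNl, dotNr) (dotC wv u); ring.
have DN : dot u wv <= vnorm (C^T *m (invmx B *m C) *m v).
  have := dot_le v (C^T *m (invmx B *m C) *m v); rewrite hv mul1r.
  by rewrite /u dot_mul /wv !mulmxA.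
have hf : smin G ^+ 2 * (1 - e1) >= 2 * (e1 + e2 * (e2 + 2)).
  move: hs; rewrite /f1; case/andP: he1 => a0 a1.
  have h1e : 0 < 1 - e1 by lra.
  rewrite mulrA ler_pdivrMr //.

exact: (real_final he1 he2 s0 sg g1 hf (vnorm_ge0 _) hh gU (vnorm_ge0 _) (vnorm_ge0 _)
  (vnorm_ge0 _) rW UW rr DN).
Qed.
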